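(* For every $\varepsilon\in[0,1]$, $$\min_{P,Q:\ d_{\mathrm{TV}}(P,Q)=\varepsilon}\overline{C}(P,Q)=2\,d\!\left(\tfrac{1-\varepsilon}{2}\,\Big\|\,\tfrac12\right)=(1+\varepsilon)\log(1+\varepsilon)+(1-\varepsilon)\log(1-\varepsilon),$$ where the minimum is over pairs of probability distributions on a common countable set, and it is achieved by $P=\left(\frac{1-\varepsilon}{2},\frac{1+\varepsilon}{2}\right)$, $Q=\left(\frac{1+\varepsilon}{2},\frac{1-\varepsilon}{2}\right)$.
   Context: $d_{\mathrm{TV}}(P,Q)=\frac12\sum_x |P(x)-Q(x)|$. The relative entropy is $D(P\|Q)=\sum_x P(x)\log\frac{P(x)}{Q(x)}$. The capacitory discrimination (Jensen–Shannon divergence) is $\overline{C}(P,Q)=D\!\left(P\,\|\,\frac{P+Q}{2}\right)+D\!\left(Q\,\|\,\frac{P+Q}{2}\right)$. For $p,q\in[0,1]$, $d(p\|q)=p\log\frac pq+(1-p)\log\frac{1-p}{1-q}$ is the binary relative entropy, with $0\log 0=0$. Logarithms are natural. *)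

(* Defs.v *)
From Stdlib Require Import Reals Lra.
Open Scope R_scope.

Definition plogq (p q : R) : R :=
  if Req_EM_T p 0 then 0 else p * ln (p / q).

Definition xlnx (x : R) : R := if Req_EM_T x 0 then 0 else x * ln x.

Definition bin_relent (p q : R) : R := plogq p q + plogq (1 - p) (1 - q).

Definition is_distr (P : nat -> R) : Prop :=
  (forall x, 0 <= P x) /\ infinite_sum P 1.

Definition dTV_is (P Q : nat -> R) (t : R) : Prop :=
  infinite_sum (fun x => Rabs (P x - Q x) / 2) t.

Definition relent_is (P Q : nat -> R) (d : R) : Prop :=
  infinite_sum (fun x => plogq (P x) (Q x)) d.

Definition mid (P Q : nat -> R) : nat -> R := fun x => (P x + Q x) / 2.

Definition capdisc_is (P Q : nat -> R) (c : R) : Prop :=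
  exists d1 d2, relent_is P (mid P Q) d1 /\ relent_is Q (mid P Q) d2 /\ c = d1 + d2.

Definition P0 (eps : R) : nat -> R := fun x =>
  match x with 0%nat => (1 - eps) / 2 | 1%nat => (1 + eps) / 2 | _ => 0 end.
Definition Q0 (eps : R) : nat -> R := fun x =>
  match x with 0%nat => (1 + eps) / 2 | 1%nat => (1 - eps) / 2 | _ => 0 end.

(* Main.v *)
Require Import Defs.
From Stdlib Require Import Reals Lra Lia.
From Coquelicot Require Import Coquelicot.
Open Scope R_scope.

Lemma ln_le_m1 y : 0 < y -> ln y <= y - 1.
Proof. intro H. pose proof (exp_ineq1_le (ln y)). rewrite exp_ln in H0; lra. Qed.

Lemma ln_divR x y : 0 < x -> 0 < y -> ln (x / y) = ln x - ln y.
Proof. intros. unfold Rdiv. rewrite ln_mult, ln_Rinv; try lra. apply Rinv_0_lt_compat; lra. Qed.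

Lemma plogq0 q : plogq 0 q = 0.
Proof. unfold plogq. destruct (Req_EM_T 0 0); lra. Qed.

Lemma plogq_pos p q : 0 < p -> plogq p q = p * ln (p / q).
Proof. intros. unfold plogq. destruct (Req_EM_T p 0); lra. Qed.

Lemma gibbs p m c : 0 <= p -> 0 < m -> 0 < c -> p * ln c + p - c * m <= plogq p m.
Proof.
  intros Hp Hm Hc. destruct (Req_dec p 0) as [->|Hp0].
  - rewrite plogq0. assert (0 < c*m) by (apply Rmult_lt_0_compat; lra). lra.
  - assert (Hp' : 0 < p) by lra. rewrite plogq_pos by lra.
    assert (Hcm : 0 < c * m) by (apply Rmult_lt_0_compat; lra).
    pose proof (ln_le_m1 (c * m / p)) as H.
    assert (0 < c*m/p) by (apply Rdiv_lt_0_compat; lra).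
    specialize (H H0). rewrite ln_divR in H by lra. rewrite ln_mult in H by lra.
    rewrite ln_divR by lra.
    assert (p * (c * m / p - 1) = c*m - p) by (field; lra).
    apply Rmult_le_compat_l with (r := p) in H; lra.
Qed.

Lemma plogq_upper p q : 0 <= p -> 0 <= q -> plogq p ((p + q) / 2) <= p.
Proof.
  intros Hp Hq. destruct (Req_dec p 0) as [->|Hp0].
  - rewrite plogq0; lra.
  - rewrite plogq_pos by lra.
    assert (Hm : 0 < (p+q)/2) by lra.
    assert (0 < p / ((p+q)/2)) by (apply Rdiv_lt_0_compat; lra).
    pose proof (ln_le_m1 _ H).
    assert (p / ((p+q)/2) <= 2).
    { assert (E: p / ((p+q)/2) = 2 - 2 * (q / (p+q))) by (field; lra).
      rewrite E. assert (0 <= q/(p+q)) by (apply Rmult_le_pos; [lra| left; apply Rinv_0_lt_compat; lra]). lra. }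
    assert (ln (p / ((p + q) / 2)) <= 1) by lra.
    apply Rmult_le_compat_l with (r := p) in H2; lra.
Qed.

Lemma plogq_lower p q : 0 <= p -> 0 <= q -> p - (p+q)/2 <= plogq p ((p + q) / 2).
Proof.
  intros Hp Hq. destruct (Req_dec (p+q) 0).
  - assert (p = 0) by lra. subst. rewrite plogq0. lra.
  - pose proof (gibbs p ((p+q)/2) 1 Hp ltac:(lra) ltac:(lra)). rewrite ln_1 in H0. lra.
Qed.

Lemma plogq_abs p q : 0 <= p -> 0 <= q -> Rabs (plogq p ((p + q) / 2)) <= p + Rabs (p - q) / 2.
Proof.
  intros. pose proof (plogq_upper p q H H0). pose proof (plogq_lower p q H H0).
  pose proof (Rabs_pos (p - q)). pose proof (Rle_abs (q - p)). rewrite Rabs_minus_sym in H4.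
  apply Rabs_le; lra.
Qed.

Lemma isum_plus a b la lb : infinite_sum a la -> infinite_sum b lb ->
  infinite_sum (fun n => a n + b n) (la + lb).
Proof.
  intros Ha Hb. apply is_series_Reals. apply is_series_Reals in Ha, Hb.
  exact (is_series_plus _ _ _ _ Ha Hb).
Qed.

Lemma isum_scal c a la : infinite_sum a la -> infinite_sum (fun n => c * a n) (c * la).
Proof.
  intros Ha. apply is_series_Reals. apply is_series_Reals in Ha.
  exact (is_series_scal c _ _ Ha).
Qed.

Lemma isum_ext a b l : (forall n, a n = b n) -> infinite_sum a l -> infinite_sum b l.
Proof.
  intros E Ha. apply is_series_Reals. apply is_series_Reals in Ha.
  exact (is_series_ext _ _ _ E Ha).
Qed.

Lemma isum_le a b la lb : (forall n, a n <= b n) -> infinite_sum a la -> infinite_sum b lb -> la <= lb.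
Proof.
  intros H Ha Hb. apply Rle_cv_lim with (sum_f_R0 a) (sum_f_R0 b); [|exact Ha|exact Hb].
  intro n. apply sum_Rle. auto.
Qed.




Lemma isum_term a l : (forall n, 0 <= a n) -> infinite_sum a l -> forall n, a n <= l.
Proof.
  intros Hp Ha n. apply Rle_trans with (sum_f_R0 a n).
  - destruct n; simpl; [lra|]. assert (0 <= sum_f_R0 a n) by (apply cond_pos_sum; auto). specialize (Hp (S n)). lra.
  - apply growing_ineq; auto. intro k. simpl. specialize (Hp (S k)). lra.
Qed.

Lemma xlnx_pos x : 0 < x -> xlnx x = x * ln x.
Proof. intros. unfold xlnx. destruct (Req_EM_T x 0); lra. Qed.
Lemma xlnx0 : xlnx 0 = 0.
Proof. unfold xlnx. destruct (Req_EM_T 0 0); lra. Qed.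

Lemma plogq_half x : 0 <= x -> plogq (x/2) (1/2) = xlnx x / 2.
Proof.
  intros Hx. destruct (Req_dec x 0) as [->|H].
  - replace (0/2) with 0 by field. rewrite plogq0, xlnx0. field.
  - rewrite plogq_pos by lra. rewrite xlnx_pos by lra.
    replace (x / 2 / (1 / 2)) with x by field. field.
Qed.

Lemma part3 e : 0 <= e <= 1 -> 2 * bin_relent ((1 - e) / 2) (1 / 2) = xlnx (1 + e) + xlnx (1 - e).
Proof.
  intros He. unfold bin_relent. rewrite plogq_half by lra.
  replace (1 - (1 - e) / 2) with ((1 + e) / 2) by field.
  replace (1 - 1 / 2) with (1 / 2) by field.
  rewrite plogq_half by lra. field.
Qed.

Lemma key p q e : 0 <= p -> 0 <= q -> 0 <= e < 1 ->
  (p + q) / 2 * (xlnx (1 + e) + xlnx (1 - e))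
  + (ln (1 + e) - ln (1 - e)) * (Rabs (p - q) / 2 + - e * ((p + q) / 2))
  <= plogq p ((p + q) / 2) + plogq q ((p + q) / 2).
Proof.
  intros Hp Hq He. rewrite !xlnx_pos by lra.
  set (a := ln (1 + e)). set (b := ln (1 - e)).
  destruct (Req_dec (p + q) 0).
  - assert (p = 0) by lra. assert (q = 0) by lra. subst.
    rewrite plogq0. replace (0 - 0) with 0 by ring. rewrite Rabs_R0.
    replace ((0+0)/2) with 0 by field. lra.
  - assert (Hm : 0 < (p + q) / 2) by lra.
    destruct (Rle_dec q p) as [Hqp|Hqp].
    + pose proof (gibbs p _ (1 + e) Hp Hm ltac:(lra)).
      pose proof (gibbs q _ (1 - e) Hq Hm ltac:(lra)).
      rewrite Rabs_right by lra. fold a in H0. fold b in H1.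
      replace ((p + q) / 2 * ((1 + e) * a + (1 - e) * b) + (a - b) * ((p - q) / 2 + - e * ((p + q) / 2)))
        with (p * a + q * b) by field. lra.
    + pose proof (gibbs p _ (1 - e) Hp Hm ltac:(lra)).
      pose proof (gibbs q _ (1 + e) Hq Hm ltac:(lra)).
      rewrite Rabs_left by lra. fold a in H1. fold b in H0.
      replace ((p + q) / 2 * ((1 + e) * a + (1 - e) * b) + (a - b) * (- (p - q) / 2 + - e * ((p + q) / 2)))
        with (p * b + q * a) by field. lra.
Qed.

Lemma key1 p q : 0 <= p -> 0 <= q -> (p = 0 \/ q = 0) ->
  (p + q) / 2 * (xlnx (1 + 1) + xlnx (1 - 1)) <= plogq p ((p + q) / 2) + plogq q ((p + q) / 2).
Proof.
  intros Hp Hq Hpq. replace (1 - 1) with 0 by ring. rewrite xlnx0, xlnx_pos by lra.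
  destruct Hpq as [E|E]; subst; rewrite plogq0.
  - destruct (Req_dec q 0) as [E|Hq0]; [subst|].
    + rewrite plogq0. lra.
    + rewrite plogq_pos by lra. replace (q / ((0 + q) / 2)) with (1+1) by (field; lra). lra.
  - destruct (Req_dec p 0) as [E|Hp0]; [subst|].
    + rewrite plogq0. lra.
    + rewrite plogq_pos by lra. replace (p / ((p + 0) / 2)) with (1+1) by (field; lra). lra.
Qed.

Lemma isum_two f : (forall n, (2 <= n)%nat -> f n = 0) -> infinite_sum f (f 0%nat + f 1%nat).
Proof.
  intros H. assert (Hs : forall n, (1 <= n)%nat -> sum_f_R0 f n = f 0%nat + f 1%nat).
  { induction n as [|n IH]; intros Hn; [lia|]. destruct n; [reflexivity|].
    change (sum_f_R0 f (S (S n))) with (sum_f_R0 f (S n) + f (S (S n))).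
    rewrite IH by lia. rewrite (H (S (S n))) by lia. ring. }
  intros eps Heps. exists 1%nat. intros n Hn. rewrite Hs by lia. unfold Rdist.
  replace (f 0%nat + f 1%nat - (f 0%nat + f 1%nat)) with 0 by ring. rewrite Rabs_R0. lra.
Qed.

Lemma isum_val f l l' : infinite_sum f l -> l = l' -> infinite_sum f l'.
Proof. intros; subst; auto. Qed.

Lemma part2 eps : 0 <= eps <= 1 ->
  is_distr (P0 eps) /\ is_distr (Q0 eps) /\ dTV_is (P0 eps) (Q0 eps) eps /\
      capdisc_is (P0 eps) (Q0 eps) (2 * bin_relent ((1 - eps) / 2) (1 / 2)).
Proof.
  intros He. split; [|split; [|split]].
  - split. + intros [|[|n]]; simpl; lra.
    + replace 1 with (P0 eps 0 + P0 eps 1) by (simpl; field). apply isum_two.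
      intros [|[|n]] Hn; [lia|lia|reflexivity].
  - split. + intros [|[|n]]; simpl; lra.
    + replace 1 with (Q0 eps 0 + Q0 eps 1) by (simpl; field). apply isum_two.
      intros [|[|n]] Hn; [lia|lia|reflexivity].
  - unfold dTV_is.
    eapply isum_val.
    + apply (isum_two (fun x => Rabs (P0 eps x - Q0 eps x) / 2)).
      intros [|[|n]] Hn; [lia|lia|]. simpl. replace (0 - 0) with 0 by ring. rewrite Rabs_R0. field.
    + simpl. replace ((1 - eps) / 2 - (1 + eps) / 2) with (- eps) by field.
      replace ((1 + eps) / 2 - (1 - eps) / 2) with eps by field.
      rewrite Rabs_Ropp, Rabs_right by lra. field.
  - unfold bin_relent.
    replace (1 - (1 - eps) / 2) with ((1 + eps) / 2) by field.
    replace (1 - 1 / 2) with (1 / 2) by field.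
    exists (plogq (P0 eps 0) (mid (P0 eps) (Q0 eps) 0) + plogq (P0 eps 1) (mid (P0 eps) (Q0 eps) 1)).
    exists (plogq (Q0 eps 0) (mid (P0 eps) (Q0 eps) 0) + plogq (Q0 eps 1) (mid (P0 eps) (Q0 eps) 1)).
    split; [|split].
    + apply (isum_two (fun x => plogq (P0 eps x) (mid (P0 eps) (Q0 eps) x))).
      intros [|[|n]] Hn; [lia|lia|]. simpl. apply plogq0.
    + apply (isum_two (fun x => plogq (Q0 eps x) (mid (P0 eps) (Q0 eps) x))).
      intros [|[|n]] Hn; [lia|lia|]. simpl. apply plogq0.
    + unfold mid; simpl.
      replace (((1 - eps) / 2 + (1 + eps) / 2) / 2) with (1/2) by field.
      replace (((1 + eps) / 2 + (1 - eps) / 2) / 2) with (1/2) by field. ring.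
Qed.

Lemma relent_exists P Q : is_distr P -> is_distr Q -> forall t, dTV_is P Q t ->
  exists d, relent_is P (mid P Q) d.
Proof.
  intros [HP0 HP] [HQ0 HQ] t Ht.
  assert (Hb := isum_plus _ _ _ _ HP Ht).
  assert (Hex : ex_series (fun x => plogq (P x) (mid P Q x))).
  { apply (@ex_series_le R_AbsRing R_CompleteNormedModule) with (b := fun n => P n + Rabs (P n - Q n) / 2).
    - intro n. apply (plogq_abs (P n) (Q n)); auto.
    - exists (1 + t). apply is_series_Reals. exact Hb. }
  exists (Series (fun x => plogq (P x) (mid P Q x))). apply is_series_Reals.
  apply Series_correct. exact Hex.
Qed.

Lemma dTV_sym P Q t : dTV_is P Q t -> dTV_is Q P t.
Proof.
  apply isum_ext. intro n. rewrite Rabs_minus_sym. reflexivity.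
Qed.

Lemma part1 eps : 0 <= eps <= 1 -> forall P Q : nat -> R, is_distr P -> is_distr Q -> dTV_is P Q eps ->
     exists c, capdisc_is P Q c /\ 2 * bin_relent ((1 - eps) / 2) (1 / 2) <= c.
Proof.
  intros He P Q HP HQ Ht.
  destruct (relent_exists P Q HP HQ eps Ht) as [d1 H1].
  destruct (relent_exists Q P HQ HP eps (dTV_sym _ _ _ Ht)) as [d2 H2].
  assert (H2' : relent_is Q (mid P Q) d2).
  { revert H2. apply isum_ext. intro n. unfold mid. rewrite (Rplus_comm (Q n)). reflexivity. }
  exists (d1 + d2). split. { exists d1, d2. auto. }
  rewrite part3 by lra.
  assert (Hg := isum_plus _ _ _ _ H1 H2').
  destruct HP as [HP0 HP], HQ as [HQ0 HQ].
  assert (Hm : infinite_sum (fun n => (P n + Q n) / 2) 1).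
  { assert (Hm0 := isum_scal (/2) _ _ (isum_plus _ _ _ _ HP HQ)).
    eapply isum_val; [eapply isum_ext; [|exact Hm0]; intro; simpl; field | field]. }
  destruct (Req_dec eps 1) as [E|Hlt].
  - subst eps.
    assert (Hz : infinite_sum (fun n => (P n + Q n) / 2 + - (Rabs (P n - Q n) / 2)) (1 + - 1)).
    { apply isum_plus; [exact Hm|]. assert (Ht1 := isum_scal (-1) _ _ Ht).
      eapply isum_val; [eapply isum_ext; [|exact Ht1]; intro; simpl; ring | ring]. }
    assert (Hterm : forall n, P n = 0 \/ Q n = 0).
    { intro n. assert (Hnn : forall n, 0 <= (P n + Q n) / 2 + - (Rabs (P n - Q n) / 2)).
      { intro k. specialize (HP0 k). specialize (HQ0 k).
        destruct (Rcase_abs (P k - Q k)); [rewrite Rabs_left|rewrite Rabs_right]; lra. }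
      pose proof (isum_term _ _ Hnn Hz n) as Hle. cbv beta in Hle. specialize (HP0 n). specialize (HQ0 n).
      destruct (Rcase_abs (P n - Q n)); [rewrite Rabs_left in Hle|rewrite Rabs_right in Hle]; lra. }
    eapply (isum_le (fun n => (xlnx (1 + 1) + xlnx (1 - 1)) * ((P n + Q n) / 2)) _ _ _); [| |exact Hg].
    + intro n. rewrite Rmult_comm. apply key1; auto.
    + eapply isum_val; [apply isum_scal; exact Hm | ring].
  - set (K := xlnx (1 + eps) + xlnx (1 - eps)).
    set (L := ln (1 + eps) - ln (1 - eps)).
    eapply (isum_le (fun n => (P n + Q n) / 2 * K + L * (Rabs (P n - Q n) / 2 + - eps * ((P n + Q n) / 2))) _ _ _); [| |exact Hg].
    + intro n. apply key; auto. lra.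
    + assert (A1 := isum_scal K _ _ Hm).
      assert (A2 := isum_scal L _ _ (isum_plus _ _ _ _ Ht (isum_scal (-eps) _ _ Hm))).
      assert (A3 := isum_plus _ _ _ _ A1 A2).
      eapply isum_val; [eapply isum_ext; [|exact A3]; intro; simpl; ring | ring].
Qed.

Theorem proposition3 (eps : R) (Heps : 0 <= eps <= 1) :
  (forall P Q : nat -> R, is_distr P -> is_distr Q -> dTV_is P Q eps ->
     exists c, capdisc_is P Q c /\ 2 * bin_relent ((1 - eps) / 2) (1 / 2) <= c)
  /\ (is_distr (P0 eps) /\ is_distr (Q0 eps) /\ dTV_is (P0 eps) (Q0 eps) eps /\
      capdisc_is (P0 eps) (Q0 eps) (2 * bin_relent ((1 - eps) / 2) (1 / 2)))
  /\ 2 * bin_relent ((1 - eps) / 2) (1 / 2) = xlnx (1 + eps) + xlnx (1 - eps).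
Proof.
  split; [apply part1; auto|split; [apply part2; auto|apply part3; auto]].
Qed.
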